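(* In the setting described in the context, suppose $p_j(\theta)>0$ for all $j$ and all $\theta$. Then $H(\theta)=C_\Upsilon(\theta)$ holds if and only if the channel is quasi-classical, i.e. the eigenvectors $|w_k\rangle$ of the output state do not depend on $\theta$.
   Context: A one-parameter quantum channel is a map $\rho_0\mapsto\sum_k E_k(\theta)\rho_0E_k(\theta)^\dagger$ on density matrices on $\mathbb{C}^d$, with Kraus operators depending differentiably on real $\theta$ and $\sum_k E_k^\dagger E_k=I$. The input is a fixed pure state $\rho_0=|\psi_0\rangle\langle\psi_0|$. Canonical Kraus operators $\{\Upsilon_k(\theta)\}_{k=1}^d$: a differentiable Kraus representation of the same channel with $\mathrm{tr}\{\Upsilon_k\rho_0\Upsilon_j^\dagger\}=\delta_{jk}p_k(\theta)$. The output state is $\rho_{out}(\theta)=\sum_k p_k(\theta)|w_k(\theta)\rangle\langle w_k(\theta)|$ with $|w_k\rangle=p_k^{-1/2}\Upsilon_k|\psi_0\rangle$ an orthonormal basis depending differentiably on $\theta$. A prime denotes $d/d\theta$. $C_\Upsilon(\theta)=4\sum_k\mathrm{tr}\{\Upsilon_k'\rho_0\Upsilon_k'^\dagger\}$, and $H(\theta)=\mathrm{tr}\{\rho_{out}\lambda^2\}$ is the SLD quantum information, $\lambda$ a self-adjoint solution of $\rho_{out}'=\frac12(\rho_{out}\lambda+\lambda\rho_{out})$. *)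

(* Defs.v *)
From HB Require Import structures.
From mathcomp Require Import all_boot all_order all_algebra.
From mathcomp Require Import complex.
From mathcomp Require Import all_classical all_reals all_analysis.
Set Implicit Arguments. Unset Strict Implicit. Unset Printing Implicit Defensive.
Import Order.TTheory GRing.Theory Num.Theory.
Local Open Scope ring_scope.

Section QDefs.
Variable R : realType.

Definition adj (m n : nat) (A : 'M[R[i]]_(m, n)) : 'M[R[i]]_(n, m) :=
  map_mx Num.conj A^T.

Definition RtoC (x : R) : R[i] := Complex x 0.

Definition mx_derivable (m n : nat) (F : R -> 'M[R[i]]_(m, n)) : Prop :=
  forall (t : R) (i : 'I_m) (j : 'I_n),
    derivable (fun s => complex.Re (F s i j)) t 1 /\
    derivable (fun s => complex.Im (F s i j)) t 1.

Definition mx_deriv (m n : nat) (F : R -> 'M[R[i]]_(m, n)) (t : R)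
  : 'M[R[i]]_(m, n) :=
  \matrix_(i < m, j < n)
     Complex (derive1 (fun s => complex.Re (F s i j)) t)
             (derive1 (fun s => complex.Im (F s i j)) t).

Definition pure_dm (d : nat) (psi0 : 'cV[R[i]]_d) : 'M[R[i]]_d :=
  psi0 *m adj psi0.

Definition chan_out (d : nat) (psi0 : 'cV[R[i]]_d)
  (Y : 'I_d -> R -> 'M[R[i]]_d) (t : R) : 'M[R[i]]_d :=
  \sum_(k < d) (Y k t *m pure_dm psi0 *m adj (Y k t)).

Definition wvec (d : nat) (psi0 : 'cV[R[i]]_d)
  (Y : 'I_d -> R -> 'M[R[i]]_d) (p : 'I_d -> R -> R) (k : 'I_d) (t : R)
  : 'cV[R[i]]_d :=
  RtoC (Num.sqrt (p k t))^-1 *: (Y k t *m psi0).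

Definition C_Ups (d : nat) (psi0 : 'cV[R[i]]_d)
  (Y : 'I_d -> R -> 'M[R[i]]_d) (t : R) : R[i] :=
  4%:R * \sum_(k < d)
    \tr (mx_deriv (Y k) t *m pure_dm psi0 *m adj (mx_deriv (Y k) t)).

Definition is_SLD (d : nat) (rho rho' lam : 'M[R[i]]_d) : Prop :=
  adj lam = lam /\ rho' = (2%:R)^-1 *: (rho *m lam + lam *m rho).

Definition SLD_info (d : nat) (rho lam : 'M[R[i]]_d) : R[i] :=
  \tr (rho *m (lam *m lam)).

Definition quasi_classical (d : nat) (psi0 : 'cV[R[i]]_d)
  (Y : 'I_d -> R -> 'M[R[i]]_d) (p : 'I_d -> R -> R) : Prop :=
  forall (k : 'I_d) (t1 t2 : R), wvec psi0 Y p k t1 = wvec psi0 Y p k t2.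

End QDefs.

(* Main.v *)
Require Import Defs.
From HB Require Import structures.
From mathcomp Require Import all_boot all_order all_algebra.
From mathcomp Require Import complex.
From mathcomp Require Import all_classical all_reals all_analysis.
From mathcomp Require Import ring lra.
Import Order.TTheory GRing.Theory Num.Theory.
Local Open Scope ring_scope.
Set Implicit Arguments. Unset Strict Implicit.

Section Calc.
Variable R : realType.
Local Notation C := R[i].

Lemma dval (f : R -> R) (t df : R) : is_derive t (1:R) f df -> 'D_1 f t = df.
Proof. by case. Qed.

Lemma is_der_ext (f g : R -> R) (t df : R) : f = g -> is_derive t (1:R) f df -> is_derive t (1:R) g df.
Proof. by move=> ->. Qed.

Definition cD (f : R -> C) (t : R) (z : C) : Prop :=
  is_derive t (1:R) (fun s => complex.Re (f s)) (complex.Re z) /\ is_derive t (1:R) (fun s => complex.Im (f s)) (complex.Im z).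

Lemma cD_eq f t z z' : cD f t z -> z = z' -> cD f t z'.
Proof. by move=> ? <-. Qed.

Lemma cD_ext f g t z : f = g -> cD f t z -> cD g t z.
Proof. by move=> ->. Qed.

Lemma cD_uniq f t z z' : cD f t z -> cD f t z' -> z = z'.
Proof.
case=> [h1 h2] [h3 h4]; case: z h1 h2 => a b /= h1 h2; case: z' h3 h4 => a' b' /= h3 h4.
by rewrite -(dval h1) -(dval h3) -(dval h2) -(dval h4).
Qed.

Lemma cD_cst (c : C) t : cD (fun _ => c) t 0.
Proof. split; exact: is_derive_cst. Qed.

Lemma cD_add f g t a b : cD f t a -> cD g t b -> cD (fun s => f s + g s) t (a + b).
Proof.
case=> [h1 h2] [h3 h4]; split.
- apply: (@is_der_ext (fun s => complex.Re (f s) + complex.Re (g s))).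
    by apply/funext => s; case: (f s); case: (g s).
  by case: a h1 h2 => ? ? h1 _; case: b h3 h4 => ? ? h3 _; exact: is_deriveD.
- apply: (@is_der_ext (fun s => complex.Im (f s) + complex.Im (g s))).
    by apply/funext => s; case: (f s); case: (g s).
  by case: a h1 h2 => ? ? _ h1; case: b h3 h4 => ? ? _ h3; exact: is_deriveD.
Qed.

Lemma cD_mul f g t a b : cD f t a -> cD g t b ->
  cD (fun s => f s * g s) t (a * g t + f t * b).
Proof.
case=> [h1 h2] [h3 h4]; split.
- apply: (@is_der_ext ((fun s => complex.Re (f s)) * (fun s => complex.Re (g s)) -
                      (fun s => complex.Im (f s)) * (fun s => complex.Im (g s)))).
    by apply/funext => s; rewrite !fctE; case: (f s) => ? ?; case: (g s) => ? ?.
  apply: is_derive_eq.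
  case: a h1 h2 => a1 a2 /= h1 h2; case: b h3 h4 => b1 b2 /= h3 h4.
  case: (f t) => f1 f2; case: (g t) => g1 g2 /=. rewrite /GRing.scale /=. ring.
- apply: (@is_der_ext ((fun s => complex.Re (f s)) * (fun s => complex.Im (g s)) +
                      (fun s => complex.Im (f s)) * (fun s => complex.Re (g s)))).
    by apply/funext => s; rewrite !fctE; case: (f s) => ? ?; case: (g s) => ? ?.
  apply: is_derive_eq.
  case: a h1 h2 => a1 a2 /= h1 h2; case: b h3 h4 => b1 b2 /= h3 h4.
  case: (f t) => f1 f2; case: (g t) => g1 g2 /=. rewrite /GRing.scale /=. ring.
Qed.


Lemma cD_RtoC (f : R -> R) t (df : R) : is_derive t (1:R) f df ->
  cD (fun s => RtoC (f s)) t (RtoC df).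
Proof. move=> h; split => //=; exact: is_derive_cst. Qed.

Lemma cD_conj f t z : cD f t z -> cD (fun s => Num.conj (f s)) t (Num.conj z).
Proof.
case: z => z1 z2 [h1 h2]; split => /=.
- apply: (is_der_ext _ h1). by apply/funext => s; case: (f s).
- apply: (@is_der_ext (- (fun s => complex.Im (f s)))).
    by apply/funext => s; rewrite !fctE; case: (f s).
Qed.

Lemma cD_sum n (f : 'I_n -> R -> C) (df : 'I_n -> C) t :
  (forall i, cD (f i) t (df i)) -> cD (fun s => \sum_(i < n) f i s) t (\sum_(i < n) df i).
Proof.
elim: n f df => [|n IH] f df h.
  apply: (cD_ext (f := fun _ => 0)); first by apply/funext => s; rewrite big_ord0.
  by rewrite big_ord0; exact: cD_cst.
apply: (cD_ext (f := fun s => \sum_(i < n) f (widen_ord (leqnSn n) i) s + f ord_max s)).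
  by apply/funext => s; rewrite big_ord_recr.
rewrite big_ord_recr; apply: cD_add; last exact: h.
by apply: IH => i; exact: h.
Qed.

Definition mD m n (F : R -> 'M[C]_(m, n)) t (D : 'M[C]_(m, n)) : Prop :=
  forall i j, cD (fun s => F s i j) t (D i j).

Lemma mD_ext m n (F G : R -> 'M[C]_(m, n)) t D : F = G -> mD F t D -> mD G t D.
Proof. by move=> ->. Qed.

Lemma mD_uniq m n (F : R -> 'M[C]_(m, n)) t D D' : mD F t D -> mD F t D' -> D = D'.
Proof. by move=> h1 h2; apply/matrixP => i j; exact: cD_uniq (h1 i j) (h2 i j). Qed.

Lemma mD_cst m n (A : 'M[C]_(m, n)) t : mD (fun _ => A) t 0.
Proof. move=> i j; rewrite mxE; exact: cD_cst. Qed.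

Lemma mD_add m n (F G : R -> 'M[C]_(m, n)) t A B : mD F t A -> mD G t B ->
  mD (fun s => F s + G s) t (A + B).
Proof.
move=> h1 h2 i j; rewrite mxE.
apply: (cD_ext (f := fun s => F s i j + G s i j)); first by apply/funext => s; rewrite mxE.
exact: cD_add.
Qed.

Lemma mD_sum m n N (F : 'I_N -> R -> 'M[C]_(m, n)) t A :
  (forall k, mD (F k) t (A k)) -> mD (fun s => \sum_(k < N) F k s) t (\sum_(k < N) A k).
Proof.
move=> h i j; rewrite summxE.
apply: (cD_ext (f := fun s => \sum_(k < N) F k s i j)); first by apply/funext => s; rewrite summxE.
by apply: cD_sum => k; exact: h.
Qed.

Lemma mD_mul m n l (F : R -> 'M[C]_(m, n)) (G : R -> 'M[C]_(n, l)) t A B :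
  mD F t A -> mD G t B -> mD (fun s => F s *m G s) t (A *m G t + F t *m B).
Proof.
move=> h1 h2 i j; rewrite !mxE.
apply: (cD_ext (f := fun s => \sum_k F s i k * G s k j)); first by apply/funext => s; rewrite mxE.
rewrite -big_split /=; apply: cD_sum => k; exact: cD_mul.
Qed.

Lemma mD_adj m n (F : R -> 'M[C]_(m, n)) t A : mD F t A -> mD (fun s => adj (F s)) t (adj A).
Proof.
move=> h i j; rewrite !mxE.
apply: (cD_ext (f := fun s => Num.conj (F s j i))); first by apply/funext => s; rewrite !mxE.
exact: cD_conj.
Qed.

Lemma mD_scale m n (f : R -> R) (F : R -> 'M[C]_(m, n)) t df A :
  is_derive t (1:R) f df -> mD F t A ->
  mD (fun s => RtoC (f s) *: F s) t (RtoC df *: F t + RtoC (f t) *: A).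
Proof.
move=> h1 h2 i j; rewrite !mxE.
apply: (cD_ext (f := fun s => RtoC (f s) * F s i j)); first by apply/funext => s; rewrite !mxE.
apply: cD_mul => //; exact: cD_RtoC.
Qed.

Lemma mD_deriv m n (F : R -> 'M[C]_(m, n)) t : mx_derivable F -> mD F t (mx_deriv F t).
Proof.
move=> h i j; have [d1 d2] := h t i j; rewrite /mx_deriv mxE; split => /=;
  rewrite derive1E; exact: derivableP.
Qed.

Lemma mx_deriv_eq m n (F : R -> 'M[C]_(m, n)) t D : mD F t D -> mx_deriv F t = D.
Proof.
move=> h; apply/matrixP => i j; rewrite mxE; have [h1 h2] := h i j.
by rewrite !derive1E (dval h1) (dval h2); case: (D i j).
Qed.

End Calc.
Section Gen.
Variable R : realType.
Local Notation C := R[i].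

Lemma conjE (x : C) : Num.conj x = conjc x. Proof. by []. Qed.
Lemma RtoCE (x : R) : RtoC x = (real_complex R) x. Proof. by []. Qed.
Lemma conjRtoC (x : R) : Num.conj (RtoC x) = RtoC x.
Proof. by rewrite conjE /= oppr0. Qed.
Lemma RtoC_eq0 (x : R) : (RtoC x == 0) = (x == 0).
Proof. by rewrite RtoCE fmorph_eq0. Qed.
Lemma RtoC_ge0 (x : R) : (0 <= RtoC x) = (0 <= x).
Proof. by rewrite RtoCE ler0c. Qed.

Lemma adjE m n (A : 'M[C]_(m, n)) i j : adj A i j = Num.conj (A j i).
Proof. by rewrite !mxE. Qed.
Lemma adjK m n (A : 'M[C]_(m, n)) : adj (adj A) = A.
Proof. by apply/matrixP => i j; rewrite !adjE conjCK. Qed.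
Lemma adjM m n l (A : 'M[C]_(m, n)) (B : 'M[C]_(n, l)) : adj (A *m B) = adj B *m adj A.
Proof.
apply/matrixP => i j; rewrite adjE !mxE rmorph_sum; apply: eq_bigr => k _.
by rewrite rmorphM !adjE mulrC.
Qed.
Lemma adjD m n (A B : 'M[C]_(m, n)) : adj (A + B) = adj A + adj B.
Proof. by apply/matrixP => i j; rewrite !mxE rmorphD. Qed.
Lemma adjZ m n (a : C) (A : 'M[C]_(m, n)) : adj (a *: A) = Num.conj a *: adj A.
Proof. by apply/matrixP => i j; rewrite !mxE rmorphM. Qed.

Definition dgR n (f : 'I_n -> R) : 'M[C]_n := diag_mx (\row_k RtoC (f k)).
Lemma dgRE n (f : 'I_n -> R) i j : dgR f i j = RtoC (f i) *+ (i == j).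
Proof. by rewrite !mxE. Qed.
Lemma adj_dgR n (f : 'I_n -> R) : adj (dgR f) = dgR f.
Proof.
apply/matrixP => i j; rewrite adjE !dgRE eq_sym.
by case: eqP => [->|_]; rewrite ?mulr1n ?mulr0n ?conjRtoC ?rmorph0.
Qed.
Lemma dgR_mul n (f g : 'I_n -> R) : dgR f *m dgR g = dgR (fun k => f k * g k).
Proof.
by rewrite /dgR mulmx_diag; congr diag_mx; apply/rowP => k; rewrite !mxE !RtoCE rmorphM.
Qed.
Lemma dgR1 n : dgR (fun _ : 'I_n => 1) = 1%:M.
Proof. by apply/matrixP => i j; rewrite dgRE !mxE; case: (i == j). Qed.
Lemma mulLdgR m n (f : 'I_m -> R) (M : 'M[C]_(m, n)) i j : (dgR f *m M) i j = RtoC (f i) * M i j.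
Proof. by rewrite mul_diag_mx !mxE. Qed.
Lemma mulRdgR m n (f : 'I_n -> R) (M : 'M[C]_(m, n)) i j : (M *m dgR f) i j = M i j * RtoC (f j).
Proof. by rewrite mul_mx_diag !mxE. Qed.

Lemma two_neq0 : (2 : C) != 0.
Proof. by rewrite pnatr_eq0. Qed.

Lemma solve_lin (a b c : C) : c != 0 -> a * c + b = 0 -> a = - b / c.
Proof. move=> hc /eqP; rewrite addr_eq0 => /eqP <-. by rewrite mulfK. Qed.

Lemma term_off (sj sk x X y Yv Mjk Mkj : C) : sj != 0 -> sk != 0 -> sj*sj + sk*sk != 0 ->
  y * sk + sj * x = 0 -> X * sj + sk * Yv = 0 ->
  x * sk + sj * y = 2^-1 * (sj*sj * Mjk + Mjk * (sk*sk)) ->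
  Yv * sj + sk * X = 2^-1 * (sk*sk*Mkj + Mkj*(sj*sj)) ->
  sk*sk * Mkj * Mjk = 4 * (X * x) - (16 * sk^+4 * sj^+2 / (sj^+2+sk^+2)^+2) * ((x/sk) * (X/sk)).
Proof.
move=> hj hk hjk O1 O2 D1 D2.
have eM1 : Mjk = 2 * (x * sk + sj * y) / (sj*sj + sk*sk) by rewrite D1; field.
have eM2 : Mkj = 2 * (Yv * sj + sk * X) / (sj*sj + sk*sk) by rewrite D2; field.
have ey := solve_lin hk O1.
have eY : Yv = -(X*sj)/sk by apply: solve_lin => //; rewrite -O2; ring.
rewrite eM1 eM2 ey eY.
have h2 : sj ^+ 2 + sk ^+ 2 != 0 by rewrite !expr2.
by field; rewrite hk h2.
Qed.

Lemma term_diag (sk x X q M : C) : sk != 0 -> X * sk + sk * x = q ->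
  x*sk + sk*X = 2^-1 * (sk*sk*M + M*(sk*sk)) ->
  sk*sk*M*M = 4*(X*x) - (16 * sk^+4*sk^+2/(sk^+2+sk^+2)^+2) *
     ((x/sk - q/(2*sk*sk)) * (X/sk - q/(2*sk*sk))).
Proof.
move=> hk O D.
have eM : M = (x*sk + sk*X) / (sk*sk) by rewrite D; field.
have eX : X = - (sk * x - q) / sk by apply: solve_lin => //; rewrite -O; ring.
rewrite eM eX. have h2 : sk ^+ 2 + sk ^+ 2 != 0.
  by rewrite -mulr2n -mulr_natr mulf_neq0 ?expf_neq0 ?pnatr_eq0.
by field; rewrite hk h2.
Qed.

End Gen.

Section Core.
Variable R : realType.
Local Notation C := R[i].
Variables (d : nat) (W A : 'M[C]_d) (s q : 'I_d -> R).
Hypotheses (hs : forall k, 0 < s k) (hW : adj W *m W = 1%:M)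
  (hO : adj A *m dgR s + dgR s *m A = dgR q).

Definition Pm := dgR (fun k => s k * s k).
Definition Dm := A *m dgR s + dgR s *m adj A.
Definition rho := W *m Pm *m adj W.
Definition rho' := W *m Dm *m adj W.
Definition sC k := RtoC (s k).
Definition bb j k := A j k / sC k - (j == k)%:R * (RtoC (q k) / (2 * sC k * sC k)).
Definition ccC j k := 16 * sC k ^+ 4 * sC j ^+ 2 / (sC j ^+ 2 + sC k ^+ 2) ^+ 2.

Lemma hWW' : W *m adj W = 1%:M.
Proof. exact: mulmx1C. Qed.
Lemma lWW m (X : 'M[C]_(m, d)) : X *m adj W *m W = X.
Proof. by rewrite -mulmxA hW mulmx1. Qed.
Lemma lWW' m (X : 'M[C]_(m, d)) : X *m W *m adj W = X.
Proof. by rewrite -mulmxA hWW' mulmx1. Qed.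

Lemma sC_neq0 k : sC k != 0.
Proof. by rewrite /sC RtoC_eq0 gt_eqF. Qed.
Lemma sC2 k : RtoC (s k * s k) = sC k * sC k.
Proof. by rewrite /sC !RtoCE rmorphM. Qed.
Lemma conj_sC k : Num.conj (sC k) = sC k.
Proof. exact: conjRtoC. Qed.
Lemma den_neq0 j k : sC j * sC j + sC k * sC k != 0.
Proof.
rewrite -!sC2 /sC !RtoCE -rmorphD fmorph_eq0 gt_eqF //.
by apply: addr_gt0; apply: mulr_gt0.
Qed.

Lemma OE j k : Num.conj (A k j) * sC k + sC j * A j k = RtoC (q j) *+ (j == k).
Proof.
have := congr1 (fun M : 'M[C]_d => M j k) hO; rewrite /= mxE mulRdgR mulLdgR dgRE adjE.
by [].
Qed.
Lemma DE j k : Dm j k = A j k * sC k + sC j * Num.conj (A k j).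
Proof. by rewrite /Dm mxE mulRdgR mulLdgR adjE. Qed.

Lemma conj_bb j k : Num.conj (bb j k) =
  Num.conj (A j k) / sC k - (j == k)%:R * (RtoC (q k) / (2 * sC k * sC k)).
Proof.
rewrite /bb rmorphB !rmorphM rmorph_nat !fmorphV !rmorphM /=.
by rewrite !conj_sC conjRtoC rmorph_nat.
Qed.

Lemma adjDm : adj Dm = Dm.
Proof. by rewrite /Dm adjD !adjM adjK adj_dgR addrC. Qed.

Lemma core_info lam : is_SLD rho rho' lam ->
  SLD_info rho lam = 4%:R * \tr (adj A *m A)
     - \sum_j \sum_k ccC j k * (bb j k * Num.conj (bb j k)).
Proof.
move=> [_ hsld].
pose M := adj W *m lam *m W.
have hD : Dm = 2^-1 *: (Pm *m M + M *m Pm).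
  have := congr1 (fun X : 'M[C]_d => adj W *m X *m W) hsld.
  rewrite /rho' /rho /M !mulmxA hW mul1mx lWW => ->.
  rewrite -scalemxAr -scalemxAl mulmxDr mulmxDl !mulmxA hW !mul1mx !lWW.
  by [].
have hDE j k : Dm j k = 2^-1 * (sC j * sC j * M j k + M j k * (sC k * sC k)).
  by rewrite hD 2!mxE mulLdgR mulRdgR !sC2.
have -> : SLD_info rho lam = \tr (Pm *m M *m M).
  rewrite /SLD_info /rho /M -!mulmxA mxtrace_mulC !mulmxA lWW'.
  by [].
have -> : \tr (Pm *m M *m M) = \sum_k sC k * sC k * \sum_j M k j * M j k.
  rewrite /mxtrace; apply: eq_bigr => k _.
  by rewrite -mulmxA mulLdgR sC2 mxE.
rewrite /mxtrace [in RHS]exchange_big /=.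
rewrite mulr_sumr -sumrB; apply: eq_bigr => k _.
rewrite !mxE mulr_sumr mulr_sumr -sumrB; apply: eq_bigr => j _.
rewrite adjE mulrA.
case: (eqVneq j k) => [->|njk].
  rewrite conj_bb /bb eqxx mul1r.
  apply: term_diag; first exact: sC_neq0.
    by rewrite OE eqxx mulr1n.
  by rewrite -DE hDE.
rewrite conj_bb /bb (negPf njk) mul0r !subr0.
apply: (@term_off R (sC j) (sC k) (A j k) (Num.conj (A j k)) (Num.conj (A k j)) (A k j)).
- exact: sC_neq0.
- exact: sC_neq0.
- exact: den_neq0.
- by rewrite OE (negPf njk).
- by rewrite OE eq_sym (negPf njk).
- by rewrite -DE hDE.
- by rewrite -DE hDE.
Qed.

Lemma core_exists : exists lam, is_SLD rho rho' lam.
Proof.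
pose M0 := \matrix_(j, k) (2 * Dm j k / (sC j * sC j + sC k * sC k)).
have M0E j k : M0 j k = 2 * Dm j k / (sC j * sC j + sC k * sC k) by rewrite mxE.
exists (W *m M0 *m adj W); split.
  rewrite !adjM adjK mulmxA; congr (_ *m _ *m _).
  apply/matrixP => j k; rewrite adjE !M0E.
  rewrite !rmorphM rmorph_nat fmorphV rmorphD !rmorphM /= !conj_sC.
  have := congr1 (fun X : 'M[C]_d => X j k) adjDm; rewrite adjE => ->.
  by rewrite addrC.
have e : 2^-1 *: (Pm *m M0 + M0 *m Pm) = Dm.
  apply/matrixP => j k; rewrite 2!mxE mulLdgR mulRdgR !sC2 !M0E.
  have := den_neq0 j k => h.
  by field.
rewrite /rho' -e -scalemxAr -scalemxAl; congr (_ *: _).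
rewrite /rho mulmxDr mulmxDl !mulmxA !lWW.
by [].
Qed.

End Core.

Section Main.
Variable R : realType.
Local Notation C := R[i].
Variables (d : nat) (psi0 : 'cV[C]_d) (Y : 'I_d -> R -> 'M[C]_d) (p : 'I_d -> R -> R).
Hypotheses (hder : forall k, mx_derivable (Y k))
  (htr : forall t (j k : 'I_d),
     \tr (Y k t *m pure_dm psi0 *m adj (Y j t)) = if j == k then RtoC (p k t) else 0)
  (hpos : forall j t, 0 < p j t).

Definition V t : 'M[C]_d := \matrix_(i, k) (Y k t *m psi0) i 0.
Definition V' t : 'M[C]_d := \matrix_(i, k) (mx_deriv (Y k) t *m psi0) i 0.
Definition sq k t := Num.sqrt (p k t).
Definition Si t := dgR (fun k => (sq k t)^-1).
Definition Wm t : 'M[C]_d := \matrix_(i, k) wvec psi0 Y p k t i 0.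
Definition pd k t := derive1 (p k) t.
Definition Am t := adj (Wm t) *m V' t.

Lemma VD t : mD V t (V' t).
Proof.
move=> i k; rewrite mxE.
apply: (cD_ext (f := fun s => (Y k s *m psi0) i 0)); first by apply/funext => s; rewrite [RHS]mxE.
have := mD_mul (mD_deriv t (hder k)) (mD_cst psi0 t) i 0.
by rewrite mulmx0 addr0.
Qed.

Lemma outerE (u v : 'cV[C]_d) i l : (u *m adj v) i l = u i 0 * Num.conj (v l 0).
Proof. by rewrite mxE big_ord1 adjE. Qed.

Lemma VV t : adj (V t) *m V t = dgR (fun k => p k t).
Proof.
apply/matrixP => j k; rewrite dgRE.
have := htr t j k; rewrite /pure_dm !mulmxA -mulmxA -adjM mxtrace_mulC trace_mx11.
rewrite mxE => h; rewrite mxE.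
have -> : \sum_i adj (V t) j i * V t i k = \sum_i adj (Y j t *m psi0) 0 i * (Y k t *m psi0) i 0.
  by apply: eq_bigr => i _; rewrite !adjE !mxE.
rewrite h; case: eqP => [->|_]; by rewrite ?mulr1n ?mulr0n.
Qed.

Lemma rhoE t : chan_out psi0 Y t = V t *m adj (V t).
Proof.
apply/matrixP => i l; rewrite /chan_out summxE mxE; apply: eq_bigr => k _.
by rewrite /pure_dm mulmxA -mulmxA -adjM outerE adjE !mxE.
Qed.

Lemma rho'E t : mx_deriv (chan_out psi0 Y) t = V' t *m adj (V t) + V t *m adj (V' t).
Proof.
apply: mx_deriv_eq; apply: (mD_ext (F := fun s => V s *m adj (V s))).
  by apply/funext => s; rewrite rhoE.
exact: mD_mul (VD t) (mD_adj (VD t)).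
Qed.

Lemma orth_aux t : mD (fun s => dgR (fun k => p k s)) t
  (adj (V' t) *m V t + adj (V t) *m V' t).
Proof.
apply: (mD_ext (F := fun s => adj (V s) *m V s)); first by apply/funext => s; rewrite VV.
exact: mD_mul (mD_adj (VD t)) (VD t).
Qed.

Lemma pD k t : is_derive t (1:R) (p k) (pd k t).
Proof.
have [h _] := orth_aux t k k.
have e : (fun s => complex.Re (dgR (fun k => p k s) k k)) = p k.
  by apply/funext => s; rewrite dgRE eqxx mulr1n.
rewrite e in h; rewrite /pd derive1E.
have -> : 'D_1 (p k) t = complex.Re ((adj (V' t) *m V t + adj (V t) *m V' t) k k).
  exact: dval.
exact: h.
Qed.

Lemma orth t : adj (V' t) *m V t + adj (V t) *m V' t = dgR (fun k => pd k t).
Proof.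
apply/matrixP => j k; rewrite dgRE.
case: eqP => [<-|/eqP njk].
  have h := orth_aux t j j.
  rewrite mulr1n; apply: (cD_uniq h); split => /=.
    apply: (is_der_ext _ (pD j t)); by apply/funext => s; rewrite dgRE eqxx mulr1n.
  apply: (is_der_ext _ (is_derive_cst (0:R) t 1)).
  by apply/funext => s; rewrite dgRE eqxx mulr1n.
have h := orth_aux t j k.
rewrite mulr0n; apply: (cD_uniq h); apply: (cD_ext (f := fun _ => 0)); last exact: cD_cst.
by apply/funext => s; rewrite dgRE (negPf njk) mulr0n.
Qed.

Lemma CE t : C_Ups psi0 Y t = 4%:R * \tr (adj (V' t) *m V' t).
Proof.
rewrite /C_Ups /mxtrace; congr (_ * _).
have -> : \sum_i (adj (V' t) *m V' t) i i = \sum_k \sum_i Num.conj (V' t i k) * V' t i k.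
  by apply: eq_bigr => k _; rewrite mxE; apply: eq_bigr => i _; rewrite adjE.
apply: eq_bigr => k _; rewrite /mxtrace; apply: eq_bigr => i _.
by rewrite /pure_dm mulmxA -mulmxA -adjM outerE /V' !mxE mulrC.
Qed.


Lemma sq_pos k t : 0 < sq k t.
Proof. by rewrite /sq sqrtr_gt0. Qed.
Lemma sq_sq k t : sq k t * sq k t = p k t.
Proof. by rewrite /sq -expr2 sqr_sqrtr // ltW. Qed.

Lemma WE t : Wm t = V t *m Si t.
Proof.
apply/matrixP => i k; rewrite mulRdgR /Wm /V !mxE /wvec /=.
by rewrite mulrC.
Qed.

Lemma SiS t : Si t *m dgR (fun k => sq k t) = 1%:M.
Proof.
rewrite /Si dgR_mul -dgR1; congr dgR; apply/funext => k.
by rewrite mulVf // gt_eqF ?sq_pos.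
Qed.

Lemma WW t : adj (Wm t) *m Wm t = 1%:M.
Proof.
rewrite WE adjM adj_dgR !mulmxA -[_ *m adj (V t) *m V t]mulmxA VV.
rewrite !dgR_mul -dgR1; congr dgR; apply/funext => k.
by rewrite -sq_sq; field; rewrite gt_eqF ?sq_pos.
Qed.

Lemma WW' t : Wm t *m adj (Wm t) = 1%:M.
Proof. exact: mulmx1C (WW t). Qed.

Lemma VWS t : V t = Wm t *m dgR (fun k => sq k t).
Proof. by rewrite WE -mulmxA SiS mulmx1. Qed.

Lemma V'WA t : V' t = Wm t *m Am t.
Proof. by rewrite /Am mulmxA WW' mul1mx. Qed.

Lemma hO_inst t : adj (Am t) *m dgR (fun k => sq k t) + dgR (fun k => sq k t) *m Am t
  = dgR (fun k => pd k t).
Proof.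
rewrite -orth VWS V'WA (adjM (Wm t) (Am t)) (adjM (Wm t) (dgR _)) adj_dgR.
by rewrite -!mulmxA ![adj (Wm t) *m (Wm t *m _)]mulmxA WW !mul1mx.
Qed.

Lemma rho_inst t : chan_out psi0 Y t =
  rho (Wm t) (fun k => sq k t).
Proof.
rewrite rhoE /rho /Pm VWS adjM adj_dgR !mulmxA -[_ *m dgR _ *m dgR _]mulmxA dgR_mul.
by [].
Qed.

Lemma rho'_inst t : mx_deriv (chan_out psi0 Y) t =
  rho' (Wm t) (Am t) (fun k => sq k t).
Proof.
rewrite rho'E /rho' /Dm VWS V'WA !adjM adj_dgR mulmxDr mulmxDl !mulmxA.
by [].
Qed.

Lemma C_inst t : C_Ups psi0 Y t = 4%:R * \tr (adj (Am t) *m Am t).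
Proof.
rewrite CE V'WA (adjM (Wm t) (Am t)).
by rewrite -!mulmxA [adj (Wm t) *m (Wm t *m _)]mulmxA WW mul1mx.
Qed.


Definition Si' t := dgR (fun k => - (sq k t) ^- 2 * ((2 * sq k t)^-1 * pd k t)).

Lemma isqD k t : is_derive t (1:R) (fun s => (sq k s)^-1)
  (- (sq k t) ^- 2 * ((2 * sq k t)^-1 * pd k t)).
Proof.
have h1 : is_derive t (1:R) (Num.sqrt \o p k) ((2 * Num.sqrt (p k t))^-1 * pd k t).
  exact: is_derive1_comp (is_derive1_sqrt (hpos k t)) (pD k t).
have h2 : (Num.sqrt \o p k) t != 0 by rewrite /= gt_eqF // sqrtr_gt0.
exact: (is_deriveV h2 h1).
Qed.

Lemma SiD t : mD Si t (Si' t).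
Proof.
move=> i j; rewrite /Si' dgRE.
case: (eqVneq i j) => [<-|nij].
  apply: (cD_ext (f := fun s => RtoC ((sq i s)^-1))).
    by apply/funext => s; rewrite /Si dgRE eqxx mulr1n.
  rewrite mulr1n; exact: cD_RtoC (isqD i t).
apply: (cD_ext (f := fun _ => 0)).
  by apply/funext => s; rewrite /Si dgRE (negPf nij) mulr0n.
rewrite mulr0n; exact: cD_cst.
Qed.

Lemma WD t : mD Wm t (V' t *m Si t + V t *m Si' t).
Proof.
apply: (mD_ext (F := fun s => V s *m Si s)); first by apply/funext => s; rewrite WE.
exact: mD_mul (VD t) (SiD t).
Qed.

Lemma BE t j k : (adj (Wm t) *m (V' t *m Si t + V t *m Si' t)) j k
  = bb (Am t) (fun k => sq k t) (fun k => pd k t) j k.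
Proof.
rewrite mulmxDr !mulmxA VWS.
rewrite [adj (Wm t) *m (Wm t *m _)]mulmxA WW mul1mx dgR_mul.
rewrite mxE mulRdgR dgRE /bb /sC -/(Am t).
have hs : sq k t != 0 by rewrite gt_eqF ?sq_pos.
have hsC : RtoC (sq k t) != 0 by rewrite RtoC_eq0.
case: (eqVneq j k) => [->|njk].
  rewrite mulr1n mul1r !RtoCE !(rmorphM, rmorphN, fmorphV, rmorphXn, rmorph_nat) /=.
  by field; exact: hsC.
by rewrite mulr0n addr0 mul0r subr0 RtoCE fmorphV.
Qed.

Lemma quasi_b0 : quasi_classical psi0 Y p ->
  forall t j k, bb (Am t) (fun k => sq k t) (fun k => pd k t) j k = 0.
Proof.
move=> hq t j k; rewrite -BE.
have -> : V' t *m Si t + V t *m Si' t = 0.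
  apply: (mD_uniq (WD t)); apply: (mD_ext (F := fun _ => Wm t)); last exact: mD_cst.
  by apply/funext => s; apply/matrixP => i l; rewrite /Wm mxE [RHS]mxE (hq l t s).
by rewrite mulmx0 mxE.
Qed.

Lemma b0_quasi : (forall t j k, bb (Am t) (fun k => sq k t) (fun k => pd k t) j k = 0) ->
  quasi_classical psi0 Y p.
Proof.
move=> hb k t1 t2.
have h0 t : mD Wm t 0.
  have e : adj (Wm t) *m (V' t *m Si t + V t *m Si' t) = 0.
    by apply/matrixP => a b; rewrite BE hb mxE.
  have e2 : V' t *m Si t + V t *m Si' t = Wm t *m (adj (Wm t) *m (V' t *m Si t + V t *m Si' t)).
    by rewrite mulmxA WW' mul1mx.
  by rewrite -(mulmx0 _ (Wm t)) -e -e2; exact: WD.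
apply/matrixP => i j; rewrite (ord1 j).
have eq : Wm t1 i k = Wm t2 i k.
  have hr t : is_derive t (1:R) (fun s => complex.Re (Wm s i k)) 0.
    by have := (h0 t i k).1; rewrite mxE.
  have hi t : is_derive t (1:R) (fun s => complex.Im (Wm s i k)) 0.
    by have := (h0 t i k).2; rewrite mxE.
  have e1 := is_derive_0_is_cst t1 t2 hr. have e2 := is_derive_0_is_cst t1 t2 hi.
  move: e1 e2 => /=; case: (Wm t1 i k) => a b; case: (Wm t2 i k) => c e /= -> ->.
  by [].
by move: eq; rewrite /Wm !mxE.
Qed.

End Main.

Lemma sum_pos_eq0 (R : realType) d (s : 'I_d -> R) (b : 'I_d -> 'I_d -> R[i]) :
  (forall k, 0 < s k) ->
  \sum_j \sum_k ccC s j k * (b j k * Num.conj (b j k)) = 0 -> forall j k, b j k = 0.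
Proof.
move=> hs h j k.
have sCpos m : 0 < sC s m.
  by rewrite lt_def /sC RtoC_eq0 RtoC_ge0 gt_eqF ?ltW.
have cpos m n : 0 < ccC s m n.
  rewrite /ccC; apply: divr_gt0; last by apply: exprn_gt0; apply: addr_gt0; apply: exprn_gt0.
  by apply: mulr_gt0; [apply: mulr_gt0; [rewrite ltr0n|apply: exprn_gt0]|apply: exprn_gt0].
have tpos m n : 0 <= ccC s m n * (b m n * Num.conj (b m n)).
  by apply: mulr_ge0; [exact: ltW|exact: mul_conjC_ge0].
have h1 : \sum_k ccC s j k * (b j k * Num.conj (b j k)) = 0.
  exact: (@psumr_eq0P _ _ (fun _ => true) (fun m => \sum_k ccC s m k * (b m k * Num.conj (b m k)))
     (fun m _ => sumr_ge0 _ (fun n _ => tpos m n)) h j isT).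
have h2 : ccC s j k * (b j k * Num.conj (b j k)) = 0.
  exact: (@psumr_eq0P _ _ (fun _ => true) (fun n => ccC s j n * (b j n * Num.conj (b j n)))
     (fun n _ => tpos j n) h1 k isT).
move/eqP: h2; rewrite mulf_eq0 gt_eqF //= mul_conjC_eq0 => /eqP.
by [].
Qed.

Unset Implicit Arguments.
Set Strict Implicit.

Theorem lemma3 (R : realType) (d : nat) (psi0 : 'cV[R[i]]_d)
  (Y : 'I_d -> R -> 'M[R[i]]_d) (p : 'I_d -> R -> R) :
  adj psi0 *m psi0 = 1%:M ->
  (forall k, mx_derivable (Y k)) ->
  (forall t, \sum_(k < d) (adj (Y k t) *m Y k t) = 1%:M) ->
  (forall t (j k : 'I_d),
     \tr (Y k t *m pure_dm psi0 *m adj (Y j t))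
       = if j == k then RtoC (p k t) else 0) ->
  (forall j t, 0 < p j t) ->
  ((forall (t : R) (lam : 'M[R[i]]_d),
      is_SLD (chan_out psi0 Y t) (mx_deriv (chan_out psi0 Y) t) lam ->
      SLD_info (chan_out psi0 Y t) lam = C_Ups psi0 Y t)
   <-> quasi_classical psi0 Y p).
Proof.
move=> _ hder _ htr hpos.
have hs t : forall k, 0 < sq p k t by move=> k; exact: sq_pos.
split.
- move=> hH; apply: (b0_quasi hder htr hpos) => t.
  have [lam hl] := core_exists (Am psi0 Y p t) (hs t) (WW htr hpos t).
  have := core_info (hs t) (WW htr hpos t) (hO_inst hder htr hpos t) hl.
  have hl' : is_SLD (chan_out psi0 Y t) (mx_deriv (chan_out psi0 Y) t) lam.
    by rewrite (rho'_inst hder htr hpos t) (rho_inst psi0 Y hpos t).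
  have := hH t lam hl'; rewrite (rho_inst psi0 Y hpos t) (C_inst htr hpos t) => ->.
  move/eqP; rewrite eq_sym subr_eq addrC -subr_eq subrr eq_sym => /eqP h0.
  exact: (sum_pos_eq0 (hs t) h0).
- move=> hq t lam hl.
  rewrite (rho'_inst hder htr hpos t) (rho_inst psi0 Y hpos t) in hl.
  rewrite (rho_inst psi0 Y hpos t) (core_info (hs t) (WW htr hpos t) (hO_inst hder htr hpos t) hl).
  rewrite (C_inst htr hpos t) big1 ?subr0 // => j _; rewrite big1 // => k _.
  by rewrite (quasi_b0 hder htr hpos hq) mul0r mulr0.
Qed.
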